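(* Let $0<p<1$, let $\mathcal{X}=\{\frac1n,\frac2n,\ldots,\frac nn\}$, and let $\mathcal{H}_{EP;p}$ be the equal-piece classifier class described in the context. For any $\alpha,\epsilon\in(0,1)$ with $\epsilon<24/p$ and $\frac{2}{|\mathcal{X}|}<\alpha<\frac{p^2\epsilon}{24}$, the class $\mathcal{H}_{EP;p}$ is $(\alpha,\epsilon)$-separable.
   Context: Each hypothesis $h\in\mathcal{H}_{EP;p}$ is determined by parameters $a^h_1,\ldots,a^h_k$ with $a^h_1+p<a^h_2,\ \ldots,\ a^h_{k-1}+p<a^h_k,\ a^h_k+p<1$, defining intervals $[a^h_1,a^h_1+p],\ldots,[a^h_k,a^h_k+p]$; for $x\in\mathcal{X}$, $h(x)=1$ iff $x\in[a^h_i,a^h_i+p]$ for some $1\le i\le k$. For a class $\mathcal{H}$ over finite domain $\mathcal{X}$, the hypotheses graph is bipartite with parts $\mathcal{H}$ and $\mathcal{X}$, $h$ adjacent to $x$ iff $h(x)=1$. For $S\subseteq\mathcal{X}$, $T\subseteq\mathcal{H}$, $d(S,T)=\frac{e(S,T)}{|S||T|}$ with $e(S,T)$ the number of edges between $S$ and $T$. Hypotheses $h_1,h_2$ are $\epsilon$-close if $|\{x\in\mathcal{X}: h_1(x)\ne h_2(x)\}|\le\epsilon|\mathcal{X}|$; $B_h(\epsilon)$ is the set of hypotheses $\epsilon$-close to $h$. $T\subseteq\mathcal{H}$ is $(\alpha,\epsilon)$-tight if some $h$ has $|T\cap B_h(\epsilon)|\ge\alpha|T|$. $\mathcal{H}$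 is $(\alpha,\epsilon)$-separable if for every $T\subseteq\mathcal{H}$ that is not $(\alpha,\epsilon)$-tight there exist $S\subseteq\mathcal{X}$ and disjoint $T_0,T_1\subseteq T$ with $|S|\ge\alpha|\mathcal{X}|$, $|T_0|,|T_1|\ge\alpha|T|$ and $|d(S,T_0)-d(S,T_1)|\ge\alpha$. *)

(* Defs.v *)
From HB Require Import structures.
From mathcomp Require Import all_boot all_order all_algebra.
From mathcomp Require Import reals.
Set Implicit Arguments. Unset Strict Implicit. Unset Printing Implicit Defensive.
Import Order.TTheory GRing.Theory Num.Theory.
Local Open Scope ring_scope.

Section Defs.
Variable R : realType.

Definition pt (n : nat) (i : 'I_n) : R := (i.+1)%:R / n%:R.

Definition hyp (n : nat) := {ffun 'I_n -> bool}.

(* Admissible parameters a_1 < ... < a_k (0-indexed as a 0, ..., a (k-1)):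
   k >= 1, 0 <= a_1, a_i + p < a_(i+1), a_k + p < 1. *)
Definition EP_params (p : R) (k : nat) (a : nat -> R) : Prop :=
  [/\ (0 < k)%N, 0 <= a 0%N,
      (forall i : nat, (i.+1 < k)%N -> a i + p < a i.+1)
    & a k.-1 + p < 1].

Definition in_EP (n : nat) (p : R) (h : hyp n) : Prop :=
  exists (k : nat) (a : nat -> R), EP_params p k a /\
    forall x : 'I_n,
      h x = [exists i : 'I_k, (a i <= pt x) && (pt x <= a i + p)].

Definition eclose (n : nat) (eps : R) (h1 h2 : hyp n) : bool :=
  #|[set x : 'I_n | h1 x != h2 x]|%:R <= eps * n%:R.

Definition edges (n : nat) (S : {set 'I_n}) (T : {set hyp n}) : nat :=
  #|[set xh : 'I_n * hyp n | [&& xh.1 \in S, xh.2 \in T & xh.2 xh.1]]|.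

Definition dens (n : nat) (S : {set 'I_n}) (T : {set hyp n}) : R :=
  (edges S T)%:R / (#|S| * #|T|)%:R.

Definition tight (n : nat) (p alpha eps : R) (T : {set hyp n}) : Prop :=
  exists h : hyp n, in_EP p h /\
    alpha * #|T|%:R <= #|[set g in T | eclose eps h g]|%:R.

Definition separable (n : nat) (p alpha eps : R) : Prop :=
  forall T : {set hyp n},
    (forall h, h \in T -> in_EP p h) ->
    ~ tight p alpha eps T ->
    exists (S : {set 'I_n}) (T0 T1 : {set hyp n}),
      [/\ T0 \subset T, T1 \subset T & [disjoint T0 & T1]] /\
      [/\ alpha * n%:R <= #|S|%:R,
          alpha * #|T|%:R <= #|T0|%:R,
          alpha * #|T|%:R <= #|T1|%:R
        & alpha <= `|dens S T0 - dens S T1|].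

End Defs.

(* Main.v *)
Require Import Defs.
From HB Require Import structures.
From mathcomp Require Import all_boot all_order all_algebra.
From mathcomp Require Import reals.
From mathcomp Require Import zify ring lra.
From Stdlib Require Import Classical_Prop.
Import Order.TTheory GRing.Theory Num.Theory.

Section H1.
Local Open Scope ring_scope.
Lemma inj_card (T1 T2 : finType) (A : {set T1}) (C : {set T2}) (P : T1 -> T2 -> bool) :
  (forall x, x \in A -> exists y, (y \in C) && P x y) ->
  (forall x x' y, x \in A -> x' \in A -> P x y -> P x' y -> x = x') ->
  (#|A| <= #|C|)%N.
Proof.
move=> Hex Hinj.
have [->|/set0Pn [x0 Hx0]] := eqVneq A set0; first by rewrite cards0.
have [y0 _] := Hex x0 Hx0.
pose f x := odflt y0 [pick y in C | P x y].
have Hf : forall x, x \in A -> (f x \in C) && P x (f x).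
  move=> x /Hex [y Hy]; rewrite /f; case: pickP => [z Hz|/(_ y)] //=.
  by rewrite Hy.
rewrite -(card_in_imset (f := f)); last first.
  move=> x x' Hx Hx' E; apply: (Hinj x x' (f x)) => //.
    by case/andP: (Hf x Hx).
  by rewrite E; case/andP: (Hf x' Hx').
apply: subset_leq_card; apply/subsetP => y /imsetP [x Hx ->].
by case/andP: (Hf x Hx).
Qed.

Lemma disc_ivt (f : nat -> bool) y z : (y <= z)%N -> f y != f z ->
  exists w, [/\ (y <= w)%N, (w < z)%N & f w != f w.+1].
Proof.
elim: z => [|z IH]; first by rewrite leqn0 => /eqP -> ; rewrite eqxx.
rewrite leq_eqVlt => /orP [/eqP ->|]; first by rewrite eqxx.
rewrite ltnS => Hyz Hf.
case E: (f z == f z.+1).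
  have Hf' : f y != f z by rewrite (eqP E).
  have [w [H1 H2 H3]] := IH Hyz Hf'.
  by exists w; split => //; apply: ltnW.
by exists z; split => //; rewrite E.
Qed.

End H1.

Set Implicit Arguments.
Section Sw.
Local Open Scope ring_scope.
Variable R : realType.
Variable N : nat.
Local Notation n := N.+1.

Lemma pt_le (x y : 'I_n) : (x <= y)%N -> pt R x <= pt R y.
Proof.
move=> H; rewrite /pt ler_pM2r ?invr_gt0 ?ltr0n // ler_nat ltnS //.
Qed.

Lemma pt_lt (x y : 'I_n) : (x < y)%N -> pt R x < pt R y.
Proof.
move=> H; rewrite /pt ltr_pM2r ?invr_gt0 ?ltr0n // ltr_nat ltnS //.
Qed.

Definition Sw (g : hyp n) : {set 'I_n} :=
  [set x : 'I_n | (x < N)%N && (g x != g (inord x.+1))].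

Lemma params_lb (p : R) k a : EP_params p k a -> forall i, (i < k)%N -> i%:R * p <= a i.
Proof.
case=> _ H0 Hs _; elim=> [|i IH] Hi; first by rewrite mul0r.
have := Hs i Hi; have := IH (ltnW Hi); rewrite -natr1; lra.
Qed.

Lemma params_k (p : R) k a : 0 < p -> EP_params p k a -> k%:R * p < 1.
Proof.
move=> hp HP; have := params_lb HP; case: HP => Hk _ _ Hl.
move=> /(_ k.-1); rewrite prednK // => /(_ (leqnn _)).
rewrite -(prednK Hk) -natr1 /=; lra.
Qed.

Lemma sw_bound (p : R) (g : hyp n) : 0 < p -> in_EP p g ->
  exists k, (#|Sw g| <= 2 * k)%N /\ k%:R * p < 1.
Proof.
move=> hp [k [a [HP Hg]]]; exists k; split; last exact: (params_k hp HP).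
have Hinv : forall x : 'I_n, (x < N)%N -> nat_of_ord (inord x.+1 : 'I_n) = x.+1.
  by move=> x Hx; rewrite inordK.
have Hlt : forall x : 'I_n, (x < N)%N -> pt R x < pt R (inord x.+1 : 'I_n).
  by move=> x Hx; apply: pt_lt; rewrite Hinv.
have Hsep : forall x x' : 'I_n, (x < N)%N -> (x < x')%N -> pt R (inord x.+1 : 'I_n) <= pt R x'.
  by move=> x x' Hx Hxx; apply: pt_le; rewrite Hinv.
have Hup : (#|[set x in Sw g | ~~ g x]| <= k)%N.
  rewrite -[k]card_ord -cardsT.
  apply: (@inj_card _ _ _ _ (fun (x : 'I_n) (i : 'I_k) => (pt R x < a i) && (a i <= pt R (inord x.+1 : 'I_n)))).
    move=> x; rewrite !inE => /andP [/andP [Hx Hne] Hgx].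
    have Hg1 : g (inord x.+1) by move: Hne Hgx; case: (g x); case: (g _).
    move: Hg1; rewrite Hg => /existsP [i /andP [H1 H2]].
    exists i; rewrite inE /= H1 andbT.
    move: Hgx; rewrite Hg negb_exists => /forallP /(_ i).
    have := Hlt x Hx; rewrite negb_and -!ltNge => Hl /orP [] // Hc; exfalso; lra.
  move=> x x' i; rewrite !inE => /andP [/andP [Hx _] _] /andP [/andP [Hx' _] _].
  move=> /andP [A1 A2] /andP [B1 B2].
  case: (ltngtP x x') => [H|H|/val_inj //].
    by have := lt_le_trans B1 (le_trans A2 (Hsep x x' Hx H)); rewrite ltxx.
  by have := lt_le_trans A1 (le_trans B2 (Hsep x' x Hx' H)); rewrite ltxx.
have Hdown : (#|[set x in Sw g | g x]| <= k)%N.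
  rewrite -[k]card_ord -cardsT.
  apply: (@inj_card _ _ _ _ (fun (x : 'I_n) (i : 'I_k) => (pt R x <= a i + p) && (a i + p < pt R (inord x.+1 : 'I_n)))).
    move=> x; rewrite !inE => /andP [/andP [Hx Hne] Hgx].
    have Hg1 : ~~ g (inord x.+1) by move: Hne Hgx; case: (g x); case: (g _).
    move: Hgx; rewrite Hg => /existsP [i /andP [H1 H2]].
    exists i; rewrite inE /= H2 /=.
    move: Hg1; rewrite Hg negb_exists => /forallP /(_ i).
    have := Hlt x Hx; rewrite negb_and -!ltNge => Hl /orP [] // Hc; exfalso; lra.
  move=> x x' i; rewrite !inE => /andP [/andP [Hx _] _] /andP [/andP [Hx' _] _].
  move=> /andP [A1 A2] /andP [B1 B2].
  case: (ltngtP x x') => [H|H|/val_inj //].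
    by have := le_lt_trans B1 (lt_le_trans A2 (Hsep x x' Hx H)); rewrite ltxx.
  by have := le_lt_trans A1 (lt_le_trans B2 (Hsep x' x Hx' H)); rewrite ltxx.
have -> : Sw g = [set x in Sw g | ~~ g x] :|: [set x in Sw g | g x].
  by apply/setP => x; rewrite !inE; case: (g x); rewrite ?andbT ?andbF ?orbF.
rewrite mul2n -addnn; apply: leq_trans (leq_card_setU _ _).1 _; exact: leq_add.
Qed.

End Sw.
Set Implicit Arguments.

Section Blocks.
Variable N : nat.
Local Notation n := N.+1.
Variable m : nat.
Hypothesis Hm : (0 < m)%N.

Definition B (b : nat) : {set 'I_n} := [set x : 'I_n | x %/ m == b].
Definition dist (g h : hyp n) := #|[set x | g x != h x]|.

Lemma div_le_N (x : 'I_n) : (x %/ m <= N)%N.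
Proof. apply: leq_trans (leq_div _ _) _; rewrite -ltnS; exact: ltn_ord. Qed.

Lemma tail_bound : (#|[set x : 'I_n | (n %/ m <= x %/ m)%N]| <= m)%N.
Proof.
rewrite -[m in (_ <= m)%N]card_ord -cardsT.
apply: (@inj_card _ _ _ _ (fun (x : 'I_n) (j : 'I_m) => nat_of_ord j == x - n %/ m * m)).
  move=> x; rewrite inE => Hx.
  have Hlt : (x - n %/ m * m < m)%N.
    have := ltn_ord x; have := ltn_pmod n Hm; have := divn_eq n m.
    set q := (n %/ m * m)%N; set r := (n %% m)%N; lia.
  by exists (Ordinal Hlt); rewrite inE /=.
move=> x x' j; rewrite !inE => Hx Hx' /eqP E1 /eqP E2.
apply: val_inj => /=.
have L1 : (n %/ m * m <= x)%N.
  exact: leq_trans (leq_mul Hx (leqnn m)) (leq_trunc_div x m).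
have L2 : (n %/ m * m <= x')%N.
  exact: leq_trans (leq_mul Hx' (leqnn m)) (leq_trunc_div x' m).
move: E1 E2 L1 L2; set q := (n %/ m * m)%N; lia.
Qed.

Lemma card_block b : (b < n %/ m)%N -> (m <= #|B b|)%N.
Proof.
move=> Hb; rewrite -[m in (m <= _)%N]card_ord -cardsT.
apply: (@inj_card _ _ _ _ (fun (j : 'I_m) (x : 'I_n) => nat_of_ord x == b * m + j)).
  move=> j _.
  have Hlt : (b * m + j < n)%N.
    apply: leq_trans (leq_trunc_div n m).
    apply: leq_trans (leq_mul Hb (leqnn m)).
    by rewrite mulSn addnC ltn_add2r.
  exists (Ordinal Hlt); rewrite !inE /= eqxx andbT.
  by rewrite divnMDl // divn_small // addn0.
move=> j j' x _ _ /eqP E1 /eqP E2; apply: val_inj => /=.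
by move: E1 E2; lia.
Qed.


Definition Min (c : nat -> bool) (g : hyp n) : {set 'I_n} :=
  [set b : 'I_n | (b < n %/ m)%N && [forall x in B b, g x != c b]].

Lemma dist_bound (c : nat -> bool) (g : hyp n) :
  (dist g [ffun x : 'I_n => c (x %/ m)%N] <= m + m * (#|Min c g| + #|Sw g|))%N.
Proof.
set BB := [set b : 'I_n | (b < n %/ m)%N && [exists y in B b, g y != c b]].
have Hsub : [set x | g x != [ffun x : 'I_n => c (x %/ m)%N] x] \subset
   [set x : 'I_n | (n %/ m <= x %/ m)%N] :|: [set x : 'I_n | (inord (x %/ m) : 'I_n) \in BB].
  apply/subsetP => x; rewrite !inE ffunE => Hx.
  rewrite inordK ?ltnS ?div_le_N //; case: leqP => //= Hlt.
  idtac.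
  by apply/existsP; exists x; rewrite inE eqxx.
rewrite /dist; apply: leq_trans (subset_leq_card Hsub) _.
apply: leq_trans (leq_card_setU _ _).1 _; apply: leq_add; first exact: tail_bound.
have H1 : (#|[set x : 'I_n | (inord (x %/ m) : 'I_n) \in BB]| <= #|BB| * m)%N.
  rewrite -[m in (_ * m)%N]card_ord -cardsT -cardsX.
  apply: (@inj_card _ _ _ _ (fun (x : 'I_n) (bj : 'I_n * 'I_m) =>
      (nat_of_ord bj.1 == x %/ m) && (nat_of_ord bj.2 == x %% m))).
    move=> x; rewrite inE => Hx.
    exists (inord (x %/ m), Ordinal (ltn_pmod x Hm)); rewrite in_setX Hx in_setT /=.
    by rewrite inordK ?ltnS ?div_le_N // !eqxx.
  move=> x x' [b j] _ _ /andP [/eqP E1 /eqP E2] /andP [/eqP E3 /eqP E4].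
  apply: val_inj; rewrite /= (divn_eq x m) (divn_eq x' m) -E1 -E2 E3 E4 //.
apply: leq_trans H1 _; rewrite mulnC leq_mul2l; apply/orP; right.
have HBB : BB \subset Min c g :|: [set b in BB | ~~ [forall x in B b, g x != c b]].
  apply/subsetP => b Hb; move: (Hb); rewrite inE => /andP [Hlt Hex]; rewrite !inE Hlt Hex /=.
  by case: [forall _ in _, _].
apply: leq_trans (subset_leq_card HBB) _.
apply: leq_trans (leq_card_setU _ _).1 _; apply: leq_add => //.
apply: (@inj_card _ _ _ _ (fun (b : 'I_n) (x : 'I_n) => x %/ m == b)); last first.
  by move=> b b' x _ _ /eqP E1 /eqP E2; apply: val_inj; rewrite /= -E1 -E2.
move=> b; rewrite !inE => /andP [/andP [Hb /exists_inP [y Hy Hgy]]].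
rewrite negb_forall_in => /exists_inP [z Hz]; rewrite negbK => /eqP Hgz; have Hyz : g y != g z by rewrite Hgz.
move: Hy Hz; rewrite !inE => /eqP Hy /eqP Hz.
pose f (j : nat) := g (inord j).
clear Hgy Hgz; wlog Hle : y z Hy Hz Hyz / (y <= z)%N.
  move=> W; case: (leqP y z) => H; first exact: (W y z).
  by apply: (W z y) => //; [rewrite eq_sym | exact: ltnW].
have Hf : f y != f z by rewrite /f !inord_val.
have [w [Hw1 Hw2 Hw3]] := disc_ivt f y z Hle Hf.
have HwN : (w < N)%N by apply: leq_trans Hw2 _; rewrite -ltnS.
exists (inord w); rewrite !inE inordK; last by apply: ltnW.
rewrite HwN /=; apply/andP; split; first exact: Hw3.
apply/eqP; apply/anti_leq; apply/andP; split.
  by rewrite -Hz; apply: leq_div2r; apply: ltnW.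
by rewrite -Hy; apply: leq_div2r.
Qed.

End Blocks.

Unset Implicit Arguments.
Local Open Scope ring_scope.

Lemma dcount (T1 T2 : finType) (A : {set T1}) (Q : T1 -> T2 -> bool) :
 (\sum_(g in A) #|[set b | Q g b]| = \sum_b #|[set g in A | Q g b]|)%N.
Proof.
under eq_bigr do rewrite -sum1dep_card big_mkcond /=.
rewrite exchange_big /=; apply: eq_bigr => b _.
by rewrite -sum1dep_card big_mkcondr.
Qed.

Definition A1 N m (T : {set hyp N.+1}) b := [set g in T | [forall x in B N m b, g x]].
Definition A0 N m (T : {set hyp N.+1}) b := [set g in T | [forall x in B N m b, ~~ g x]].

Arguments A1 {N}.
Arguments A0 {N}.

Theorem theorem7 (R : realType) (n : nat) (p alpha eps : R) :
  (0 < n)%N ->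
  0 < p -> p < 1 ->
  0 < alpha -> alpha < 1 ->
  0 < eps -> eps < 1 ->
  eps < 24 / p ->
  2 / n%:R < alpha -> alpha < p ^+ 2 * eps / 24 ->
  separable n p alpha eps.
Proof.
case: n => [//|N] _ hp hp1 ha ha1 he he1 _ h2a hae T HT Hnt.
have Hn : (0 : R) < N.+1%:R by rewrite ltr0n.
have [t0|tpos] := posnP #|T|.
  exfalso; apply: Hnt.
  exists [ffun x : 'I_N.+1 => [exists i : 'I_1, (0 <= pt R x) && (pt R x <= 0 + p)]]; split.
    exists 1%N, (fun _ => 0); split.
      by split; [by [] | by [] | by case | by rewrite add0r].
    by move=> x; rewrite ffunE.
  by rewrite t0 mulr0 ler0n.
set t := #|T| in tpos *.
have Ht : (0 : R) < t%:R by rewrite ltr0n.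
set m := (Num.truncn (alpha * N.+1%:R)).+1.
have Hm0 : (0 < m)%N by [].
have Hm1 : alpha * N.+1%:R < m%:R := truncnS_gt _.
have Hm2 : m%:R <= alpha * N.+1%:R + 1.
  rewrite /m -addn1 natrD lerD2r truncn_le; apply: mulr_ge0; [exact: ltW | exact: ltW].
case: (classic (exists b, [/\ (b < N.+1 %/ m)%N, alpha * t%:R <= #|A1 m T b|%:R
           & alpha * t%:R <= #|A0 m T b|%:R])) => [[b [Hb H1 H0]] | Hno].
  have HB := @card_block N m Hm0 b Hb.
  have [x0 Hx0] : exists x0, x0 \in B N m b.
    by apply/set0Pn; rewrite -card_gt0; apply: leq_trans HB.
  have HA1 : (0 < #|A1 m T b|)%N.
    by rewrite -(ltr0n R); apply: lt_le_trans H1; apply: mulr_gt0.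
  exists (B N m b), (A1 m T b), (A0 m T b); split.
    split; [by apply/subsetP => g; rewrite inE => /andP [] |
            by apply/subsetP => g; rewrite inE => /andP [] |].
    rewrite -setI_eq0; apply/eqP/setP => g; rewrite !inE; apply/negP.
    move=> /andP [/andP [_ /forall_inP F1] /andP [_ /forall_inP F0]].
    by have := F0 x0 Hx0; rewrite F1.
  split => //.
    by apply: le_trans (ltW Hm1) _; rewrite ler_nat.
  have E1 : edges (B N m b) (A1 m T b) = (#|B N m b| * #|A1 m T b|)%N.
    rewrite /edges -cardsX; apply: eq_card => -[x g]; rewrite in_set in_setX /=.
    case Hx: (x \in B N m b) => //=; case Hg: (g \in A1 m T b) => //=.
    by move: Hg; rewrite inE => /andP [_ /forall_inP F]; apply: F.
  have E0 : edges (B N m b) (A0 m T b) = 0%N.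
    rewrite /edges; apply/eqP; rewrite cards_eq0; apply/eqP/setP => -[x g].
    rewrite in_set in_set0 /=; apply/negP => /and3P [Hx Hg Hgx].
    by move: Hg; rewrite inE => /andP [_ /forall_inP F]; have := F x Hx; rewrite Hgx.
  rewrite /dens E1 E0 mul0r divff ?subr0 ?normr1; first exact: ltW.
  by rewrite pnatr_eq0 -lt0n muln_gt0 HA1 andbT; apply: leq_trans HB.
have H : forall b, (b < N.+1 %/ m)%N ->
    #|A1 m T b|%:R < alpha * t%:R \/ #|A0 m T b|%:R < alpha * t%:R.
  move=> b Hb; case: (ltrP (#|A1 m T b|%:R) (alpha * t%:R)) => H1; first by left.
  case: (ltrP (#|A0 m T b|%:R) (alpha * t%:R)) => H0; first by right.
  by exfalso; apply: Hno; exists b.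
pose c b := (#|A0 m T b|%:R < alpha * t%:R :> R).
pose hs := [ffun x : 'I_N.+1 => c (x %/ m)%N].
have HK : (N.+1 %/ m)%:R * alpha <= 1.
  have : (N.+1 %/ m * m <= N.+1)%N := leq_trunc_div _ _.
  rewrite -(ler_nat R) natrM => HKm.
  have : 0 <= (N.+1 %/ m)%:R :> R := ler0n _ _.
  nra.
have HMin : \sum_(g in T) (#|Min m c g|%:R : R) <= t%:R.
  rewrite -natr_sum dcount natr_sum.
  apply: le_trans (_ : \sum_(b : 'I_N.+1) (alpha * t%:R) *+ (b < N.+1 %/ m)%N <= _).
    apply: ler_sum => b _; have [Hb|Hb] := boolP (b < N.+1 %/ m)%N; last first.
      rewrite mulr0n (_ : 0 = 0%:R) // ler_nat leqn0 cards_eq0; apply/eqP/setP => g.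
      by rewrite !inE andFb andbF.
    rewrite mulr1n.
    apply: le_trans (_ : _ <= #|if c b then A0 m T b else A1 m T b|%:R) _.
      rewrite ler_nat; apply: subset_leq_card; apply/subsetP => g.
      rewrite !inE => /andP [HgT /forall_inP F].
      case Hc: (c b) F => F; [rewrite /A0 | rewrite /A1]; rewrite inE HgT /=; apply/forall_inP => x;
        by move=> Hx; have := F x Hx; case: (g x).
    case Hc: (c b); first exact: ltW.
    case: (H b Hb) => [/ltW //|]; by rewrite -/(c b) Hc.
  rewrite sumrMnr -[X in X <= _]mulr_natr.
  have HcK : (\sum_(b : 'I_N.+1) ((b < N.+1 %/ m)%N : nat) <= N.+1 %/ m)%N.
    rewrite (eq_bigr (fun b : 'I_N.+1 => if (b < N.+1 %/ m)%N then 1%N else 0%N)); last first.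
      by move=> b _; case: (b < _)%N.
    rewrite -big_mkcond /= sum1dep_card.
    rewrite -[X in (_ <= X)%N]card_ord -cardsT.
    apply: (@inj_card _ _ _ _ (fun (b : 'I_N.+1) (j : 'I_(N.+1 %/ m)) => nat_of_ord b == j)).
      by move=> b; rewrite inE => Hb; exists (Ordinal Hb); rewrite inE /=.
    by move=> b b' j _ _ /eqP E1 /eqP E2; apply: val_inj; rewrite /= E1 E2.
  rewrite -(ler_nat R) in HcK.
  apply: le_trans (_ : alpha * t%:R * (N.+1 %/ m)%:R <= _).
    apply: ler_wpM2l => //; apply: mulr_ge0; [exact: ltW | exact: ler0n].
  have := HK; have := Ht; nra.
have HSw : \sum_(g in T) (#|Sw g|%:R : R) <= t%:R * (2 / p).
  apply: le_trans (_ : \sum_(g in T) (2 / p) <= _).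
    apply: ler_sum => g Hg; have [k [Hk Hkp]] := sw_bound hp (HT g Hg).
    rewrite -(ler_nat R) natrM in Hk.
    rewrite ler_pdivlMr //; nra.
  by rewrite sumr_const [X in _ <= X]mulrC mulr_natr.
have Hn2 : 2 < alpha * N.+1%:R by rewrite -ltr_pdivrMr.
have HD : \sum_(g in T) ((dist g hs)%:R : R) < eps * N.+1%:R * t%:R / 4.
  apply: le_lt_trans (_ : _ <= \sum_(g in T) ((m + m * (#|Min m c g| + #|Sw g|))%N%:R : R)) _.
    by apply: ler_sum => g _; rewrite ler_nat; exact: dist_bound.
  under eq_bigr do rewrite natrD natrM natrD mulrDr.
  rewrite !big_split /= sumr_const -!mulr_sumr.
  rewrite -mulr_natr -/t.
  have Hk1 : 6 * alpha * p^-1 < eps / 4.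
    have E : 6 * (p ^+ 2 * eps / 24) * p^-1 = p * eps / 4.
      by rewrite expr2; field; rewrite gt_eqF.
    apply: lt_le_trans (_ : 6 * (p ^+ 2 * eps / 24) * p^-1 <= _).
      by rewrite ltr_pM2r ?invr_gt0 // ltr_pM2l.
    rewrite E; nra.
  have Hip : p * p^-1 = 1 by rewrite mulfV // gt_eqF.
  have Hip0 : 0 < p^-1 by rewrite invr_gt0.
  move: Hk1 Hip Hip0 HMin HSw; rewrite /(2 / p).
  set ip := p^-1; set M := m%:R; set nn := N.+1%:R; set tt := t%:R.
  move=> Hk1 Hip Hip0 HMin HSw.
  have HM : M < 3 / 2 * alpha * nn by lra.
  have Hip1 : 1 < ip by nra.
  have HM0 : 0 <= M by rewrite /M ler0n.
  have E1 : M * \sum_(i in T) (#|Min m c i|%:R : R) <= M * tt by apply: ler_wpM2l.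
  have E2 : M * \sum_(i in T) (#|Sw i|%:R : R) <= M * (tt * (2 * ip)) by apply: ler_wpM2l.
  have E3 : M * (2 + 2 * ip) < eps * nn / 4.
    have : M * (2 + 2 * ip) <= 3 / 2 * alpha * nn * (4 * ip) by nra.
    have : 3 / 2 * alpha * nn * (4 * ip) < eps * nn / 4 by nra.
    lra.
  have : M * (2 + 2 * ip) * tt < eps * nn / 4 * tt by rewrite ltr_pM2r.
  lra.
exfalso; apply: Hnt.
pose G := [set g in T | (dist g hs)%:R * 2 <= eps * N.+1%:R :> R].
have HG : t%:R < (#|G|)%:R * 2 :> R.
  rewrite ltNge; apply/negP => HG.
  move: HD; rewrite (big_setID G) /=.
  have HA : 0 <= \sum_(i in T :&: G) ((dist i hs)%:R : R) by apply: sumr_ge0 => i _; exact: ler0n.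
  have HB : (eps * N.+1%:R / 2) *+ #|T :\: G| <= \sum_(i in T :\: G) ((dist i hs)%:R : R).
    rewrite -sumr_const; apply: ler_sum => g; rewrite in_setD => /andP [HnG HgT].
    by move: HnG; rewrite inE HgT /= -ltNge => Hg; rewrite ler_pdivrMr //; apply: ltW.
  have HC := cardsID G T; rewrite -/t in HC.
  have HGT : #|T :&: G| = #|G|.
    by apply: eq_card => g; rewrite !inE andbA andbb.
  rewrite HGT in HC.
  have HC' : (#|G|%:R + #|T :\: G|%:R : R) = t%:R by rewrite -natrD HC.
  move: HB; rewrite -mulr_natr => HB.
  have Hen : 0 < eps * N.+1%:R by apply: mulr_gt0.
  move: HA HB HC' HG Hen; set s1 := \sum_(i in T :&: G) _; set s2 := \sum_(i in T :\: G) _.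
  set a := (#|G|%:R : R); set b := (#|T :\: G|%:R : R); set e := eps * N.+1%:R.
  move=> HA HB HC' HG Hen HD.
  have : e / 2 * (t%:R / 2) <= e / 2 * b by apply: ler_wpM2l; lra.
  nra.
have [g0 Hg0] : exists g0, g0 \in G.
  apply/set0Pn; rewrite -card_gt0 -(ltr0n R); lra.
have Hg0T : g0 \in T by move: Hg0; rewrite inE => /andP [].
exists g0; split; first exact: HT.
apply: le_trans (_ : #|G|%:R <= _).
  have Hal : alpha < 1 / 2.
    have : p ^+ 2 * eps < 1 by rewrite expr2; nra.
    lra.
  have : alpha * t%:R <= t%:R / 2 by nra.
  lra.
rewrite ler_nat; apply: subset_leq_card; apply/subsetP => g Hg.
move: (Hg); rewrite [g \in G]inE => /andP [HgT Hgd].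
rewrite inE HgT /= /eclose.
have Hsub : [set x | g0 x != g x] \subset [set x | g0 x != hs x] :|: [set x | g x != hs x].
  apply/subsetP => x; rewrite !inE.
  by case: (g0 x); case: (g x); case: (hs x).
apply: le_trans (_ : ((dist g0 hs + dist g hs)%N%:R : R) <= _).
  rewrite ler_nat; apply: leq_trans (subset_leq_card Hsub) _; exact: (leq_card_setU _ _).1.
move: Hg0; rewrite inE => /andP [_ Hg0d].
rewrite natrD; lra.
Qed.
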